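(* Let $G$ be a connected $3$-regular multigraph, possibly with loops, embedded on a sphere $\Sigma$. If a noose $\gamma$ with respect to $G$ is $\frac{2}{3}$-edge-balanced, then it is also $\frac{2}{3}$-face-balanced.
   Context: A loop contributes $2$ to the degree of its vertex. A noose with respect to $G$ is a directed closed curve on $\Sigma$ that intersects the embedding of $G$ only in vertices of $G$, visits at least one vertex, and visits every face of $G$ at most once. It splits $\Sigma$ into the enclosed open disk (to its right) and the excluded open disk (to its left). $\mathrm{enc}(\gamma,G)$ (resp. $\mathrm{exc}(\gamma,G)$) consists of the vertices and edges of $G$ embedded in the closure of the enclosed (resp. excluded) disk. $\gamma$ is $\alpha$-edge-balanced if $|E(\mathrm{enc}(\gamma,G))|\le\alpha|E(G)|$ and $|E(\mathrm{exc}(\gamma,G))|\le\alpha|E(G)|$. $\gamma$ is $\alpha$-face-balanced if the number of faces of $G$ contained in the enclosed disk (strictly enclosed faces) and the number of faces of $G$ contained in the excluded disk (strictly excluded faces) are each at most $\alpha|F(G)|$, where $F(G)$ is the set of faces of $G$; faces traversed by $\gamma$ count for neither. *)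

(* Defs.v *)
From mathcomp Require Import all_boot all_order all_algebra all_fingroup.
Set Implicit Arguments. Unset Strict Implicit. Unset Printing Implicit Defensive.
Import Order.TTheory GRing.Theory Num.Theory.

Section Maps.
Variable D : finType.  (* darts = half-edges *)
(* s : rotation of the darts around their vertex (vertices = s-orbits);
   a : edge involution (edges = a-orbits, loops allowed: both darts of an
   edge may lie in the same s-orbit, so a loop contributes 2 to the degree). *)
Variables s a : {perm D}.

Definition phi (d : D) : D := s (a d).

(* A corner is named by a dart x : it is the angle between x and s x at the
   vertex of x; it lies in the face (phi-orbit) of s x. *)

Definition multigraph_map : Prop :=
  (forall d, a (a d) = d) /\ (forall d, a d != d).

Definition n_vertices := fcard s D.
Definition n_edges := fcard a D.
Definition n_faces := fcard phi D.

Definition cubic : Prop := forall d, fingraph.order s d = 3.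

Definition connected_map : Prop :=
  forall x y, connect (fun u v => (v == s u) || (v == a u)) x y.

(* the (connected, orientable) rotation system is an embedding on the
   sphere: genus 0, i.e. Euler's formula V - E + F = 2 *)
Definition spherical : Prop := (n_vertices + n_faces = n_edges + 2)%N.

(* A noose visiting k.+1 vertices: at its i-th vertex it enters through
   corner (A i) and leaves through corner (B i) (both at that vertex); it
   then runs inside the face of corner (B i) to the corner A (i+1 mod k.+1). *)
Definition noose k (A B : 'I_k.+1 -> D) : Prop :=
  [/\ forall i, fconnect s (A i) (B i),
      forall i j, i != j -> ~~ fconnect s (A i) (A j),
      forall i, fconnect phi (s (B i)) (s (A (ordS i))) &
      forall i j, i != j -> ~~ fconnect phi (s (B i)) (s (B j))].

Definition on_noose k (A : 'I_k.+1 -> D) (d : D) : bool :=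
  [exists i, fconnect s (A i) d].

(* lab : D -> bool is the side of the noose on which each dart (hence each
   edge) lies: true = enclosed side, false = excluded side.  At a visited
   vertex the darts s(A i), s^2(A i), ..., B i (going around the rotation
   from the entry corner to the exit corner) are on the enclosed side, the
   others on the excluded side; the two darts of an edge are on the same
   side (edges do not meet the curve); and at a non-visited vertex all darts
   are on the same side. *)
Definition noose_sides k (A B : 'I_k.+1 -> D) (lab : pred D) : Prop :=
  [/\ forall d, lab (a d) = lab d,
      forall d, ~~ on_noose A d -> lab (s d) = lab d &
      forall i d, fconnect s (A i) d ->
        lab d = (findex s (s (A i)) d <= findex s (s (A i)) (B i))%N].

Definition traversed k (B : 'I_k.+1 -> D) (d : D) : bool :=
  [exists i, fconnect phi d (s (B i))].

Definition face_on_side k (B : 'I_k.+1 -> D) (lab : pred D) (b : bool)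
    (d : D) : bool :=
  ~~ traversed B d && [forall y, fconnect phi d y ==> (lab y == b)].

Definition edges_on_side (lab : pred D) (b : bool) : nat :=
  fcard a [pred d | lab d == b].

Definition faces_on_side k (B : 'I_k.+1 -> D) (lab : pred D) (b : bool) :=
  fcard phi (face_on_side B lab b).

Definition edge_balanced (al : rat) (lab : pred D) : Prop :=
  forall b, ((edges_on_side lab b)%:R <= al * n_edges%:R)%R.

Definition face_balanced (al : rat) k (B : 'I_k.+1 -> D) (lab : pred D) :
  Prop :=
  forall b, ((faces_on_side B lab b)%:R <= al * n_faces%:R)%R.

End Maps.

(* Main.v *)
Require Import Defs.
From mathcomp Require Import all_boot all_order all_algebra all_fingroup.
From mathcomp Require Import zify.
Set Implicit Arguments. Unset Strict Implicit. Unset Printing Implicit Defensive.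


Section Genus.
Variable T : finType.
Implicit Types (s a p : {perm T}) (e : rel T).

Definition crel s a : rel T := fun u v => (v == s u) || (v == a u).

Lemma porbit_connect p e x y :
  (forall z, connect e z (p z)) -> y \in porbit p x -> connect e x y.
Proof.
move=> he /porbitP[i ->]; elim: i => [|i IH]; first by rewrite expg0 perm1 connect0.
by rewrite expgSr permM; apply: connect_trans IH (he _).
Qed.

Lemma mem_porbit1 p x : p x \in porbit p x.
Proof. by have := mem_porbit p 1 x; rewrite expg1. Qed.

Lemma crel_sym s a : connect_sym (crel s a).
Proof.
have edge x y : crel s a x y -> connect (crel s a) y x.
  case/orP=> /eqP->.
    apply: (porbit_connect (p:=s)) => [z|]; first by rewrite connect1 // /crel eqxx.
    by rewrite porbit_sym mem_porbit1.
  apply: (porbit_connect (p:=a)) => [z|]; first by rewrite connect1 // /crel eqxx orbT.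
  by rewrite porbit_sym mem_porbit1.
apply: symmetric_from_pre => x y /connectP[q hq ->].
elim: q x hq => [|z q IH] x /=; first by rewrite connect0.
by case/andP=> hxz /IH/connect_trans; apply; apply: edge.
Qed.

Lemma ncomp_le e1 e2 : connect_sym e1 -> connect_sym e2 ->
  subrel (connect e1) (connect e2) -> n_comp e2 T <= n_comp e1 T.
Proof.
move=> s1 s2 sub; rewrite /n_comp_mem.
apply: (leq_trans _ (leq_image_card (fingraph.root e2) (predI (roots e1) (mem T)))).
apply/subset_leq_card/subsetP => r; rewrite !inE andbT => /eqP rr.
apply/imageP; exists (fingraph.root e1 r); first by rewrite !inE (roots_root s1).
transitivity (fingraph.root e2 r); first by rewrite rr.
by apply/(fingraph.rootP s2); apply: sub; apply: connect_root.
Qed.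

Lemma ncomp_le1 e1 e2 x y : connect_sym e1 -> connect_sym e2 ->
  (forall u v, connect e2 u v -> [|| connect e1 u v,
       connect e1 u x && connect e1 y v | connect e1 u y && connect e1 x v]) ->
  n_comp e1 T <= (n_comp e2 T).+1.
Proof.
move=> s1 s2 H; rewrite /n_comp_mem.
rewrite (cardD1 (fingraph.root e1 y)).
set R := [predD1 _ & _].
suff: #|R| <= #|predI (roots e2) (mem T)| by case: (_ \in _) => /=; lia.
rewrite -(card_in_image (f := fingraph.root e2)); last first.
  move=> u v; rewrite !inE => /andP[uy /andP[/eqP ru _]] /andP[vy /andP[/eqP rv _]].
  move/(fingraph.rootP s2)/H.
  case/or3P => [/(fingraph.rootP s1)|/andP[_ /(fingraph.rootP s1) yv]|/andP[/(fingraph.rootP s1) uy' _]].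
  - by rewrite ru rv.
  - by rewrite yv rv eqxx in vy.
  - by rewrite -uy' ru eqxx in uy.
apply/subset_leq_card/subsetP => r /imageP[u _ ->].
by rewrite !inE (roots_root s2).
Qed.

Definition addedge e x y : rel T :=
  fun u v => [|| e u v, (u == x) && (v == y) | (u == y) && (v == x)].

Lemma connect_addedge e x y u v : connect_sym e ->
  connect (addedge e x y) u v -> [|| connect e u v,
       connect e u x && connect e y v | connect e u y && connect e x v].
Proof.
move=> se /connectP[q hq ->]; elim: q u hq => [|z q IH] u /=.
  by rewrite connect0.
case/andP=> huz /IH.
have trP w : connect e u w -> [|| connect e w (last z q),
       connect e w x && connect e y (last z q) | connect e w y && connect e x (last z q)] ->
    [|| connect e u (last z q),
       connect e u x && connect e y (last z q) | connect e u y && connect e x (last z q)].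
  move=> uw /or3P[h|/andP[h1 h2]|/andP[h1 h2]].
  - by rewrite (connect_trans uw h).
  - by rewrite (connect_trans uw h1) h2 orbT.
  - by rewrite (connect_trans uw h1) h2 !orbT.
case/or3P: huz => [/connect1 h|/andP[/eqP-> /eqP->]|/andP[/eqP-> /eqP->]].
- exact: trP.
- case/or3P => [h|/andP[h1 h2]|/andP[h1 h2]].
  + by rewrite connect0 h orbT.
  + by rewrite connect0 h2 orbT.
  + by rewrite h2.
- case/or3P => [h|/andP[h1 h2]|/andP[h1 h2]].
  + by rewrite connect0 h !orbT.
  + by rewrite h2.
  + by rewrite connect0 h2 !orbT.
Qed.

Lemma porbit_fix p x y : p x = x -> y \in porbit p x -> y = x.
Proof.
move=> px /porbitP[i ->]; elim: i => [|i IH]; first by rewrite expg0 perm1.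
by rewrite expgSr permM IH px.
Qed.

Lemma card_porbits1 : #|porbits (1 : {perm T})| = #|T|.
Proof.
rewrite card_imset // => u v e.
have : u \in porbit 1 v by rewrite -e porbit_id.
by move/porbit_fix; apply; rewrite perm1.
Qed.

Lemma genus s a : #|porbits s| + #|porbits a| + #|porbits (a * s)%g|
   <= #|T| + 2 * n_comp (crel s a) T.
Proof.
have [n] := ubnP #|[pred x | a x != x]|; elim: n a => // n IHn a /ltnSE le_a_n.
case: (pickP (fun x => a x != x)) => [x ax | aid]; last first.
  have -> : a = 1%g.
    by apply/permP => z; rewrite perm1; apply/eqP/negbFE; exact: aid z.
  rewrite mul1g card_porbits1.
  suff : #|porbits s| <= n_comp (crel s 1) T by lia.
  rewrite /n_comp_mem.
  have cP u v : connect (crel s 1) u v -> v \in porbit s u.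
    move/connectP=> [q hq ->]; elim: q u hq => [|z q IH] u /=; first by move=> _; exact: porbit_id.
    case/andP=> /orP[/eqP->|/eqP->] /IH; last by rewrite perm1.
    rewrite -!eq_porbit_mem => /eqP->.
    by have := porbit_perm s 1 u; rewrite expg1 => ->.
  apply: (leq_trans _ (leq_image_card (porbit s) (predI (roots (crel s 1)) (mem T)))).
  apply/subset_leq_card/subsetP => X /imsetP[u _ ->].
  apply/imageP; exists (fingraph.root (crel s 1) u).
    by rewrite !inE (roots_root (crel_sym s 1)).
  by apply/eqP; rewrite eq_porbit_mem porbit_sym; apply: cP; apply: connect_root.
set y := (a^-1)%g x.
set a' := (tperm x y * a)%g.
have def_a : a = (tperm x y * a')%g by rewrite /a' mulgA tperm2 mul1g.
have a'x : a' x = x by rewrite /a' permM tpermL /y permKV.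
have nxy : x != y.
  by apply: contraNneq ax => e; rewrite {1}e /y permKV.
have le_a' : #|[pred z | a' z != z]| < n.
  rewrite (cardD1 x) !inE ax in le_a_n; apply: leq_trans le_a_n.
  rewrite ltnS; apply: subset_leq_card; apply/subsetP => z.
  rewrite !inE /a' permM.
  have [-> | nzx] := eqVneq z x; first by rewrite tpermL /y permKV eqxx.
  case: tpermP => [->|->|_ _].
  - by rewrite /y permKV eqxx.
  - by move=> _ /=; rewrite /y permKV; exact: nxy.
  - by move=> ->.
have IH := IHn a' le_a'.
have Ha := porbits_mul_tperm a' x y; simpl in Ha.
rewrite -def_a nxy in Ha.
have xn : x \notin porbit a' y.
  by rewrite porbit_sym; apply/negP => /(porbit_fix a'x) e; rewrite e eqxx in nxy.
rewrite xn in Ha.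
have Hf := porbits_mul_tperm (a' * s)%g x y; simpl in Hf.
rewrite mulgA -def_a nxy in Hf.
set b := x \notin porbit (a' * s)%g y in Hf.
have Hc : n_comp (crel s a') T <= n_comp (crel s a) T + b.
  have sub2 : subrel (crel s a) (connect (addedge (crel s a') x y)).
    move=> u v /orP[/eqP->|/eqP->].
      by apply: connect1; rewrite /addedge /crel eqxx.
    rewrite def_a permM.
    case: tpermP => [->|->|_ _].
    - apply: (@connect_trans _ _ y); first by apply: connect1; rewrite /addedge !eqxx orbT.
      by apply: connect1; rewrite /addedge /crel eqxx orbT.
    - rewrite a'x; apply: connect1; rewrite /addedge !eqxx !orbT.
      done.
    - by apply: connect1; rewrite /addedge /crel eqxx !orbT.
  have sub2' := connect_sub sub2.
  case bE : b.
    rewrite addn1; apply: (ncomp_le1 (x:=x) (y:=y) (crel_sym _ _) (crel_sym _ _)).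
    by move=> u v /sub2'/(connect_addedge (crel_sym s a')).
  rewrite addn0; apply: ncomp_le; try apply: crel_sym.
  have cyx : connect (crel s a') y x.
    move/negbFE: bE; apply: porbit_connect => z; rewrite permM.
    apply: (@connect_trans _ _ (a' z)); apply: connect1; rewrite /crel eqxx //.
    by rewrite orbT.
  apply: connect_sub => u v /sub2/(connect_addedge (crel_sym s a')).
  case/or3P => [//|/andP[h1 h2]|/andP[h1 h2]].
  - by apply: connect_trans (connect_trans h1 _) h2; rewrite (crel_sym s a') .
  - exact: connect_trans (connect_trans h1 cyx) h2.
clearbody b a' y; move: Ha Hf Hc IH; case: b => /= Ha Hf Hc IH; rewrite -addnn in Ha; rewrite -?addnn in Hf;
set X1 := #|porbits a|; set X2 := #|porbits (a * s)%g|; set C1 := n_comp (crel s a) T; set X0 := #|porbits s|;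
rewrite -/X1 in Ha; rewrite -/X2 in Hf; rewrite -/C1 in Hc;
set X3 := #|porbits a'| in IH; set X4 := #|porbits (a' * s)%g| in IH; set C2 := n_comp (crel s a') T in IH;
rewrite -/X3 in Ha; rewrite -/X4 in Hf; rewrite -/C2 in Hc; rewrite -/X0 in IH;
clearbody X0 X1 X2 X3 X4 C1 C2; lia.
Qed.

End Genus.


Lemma fiber_bound (T U : finType) (A : {pred T}) (f : T -> U) k :
  (forall x, x \in A -> #|[pred y in A | f y == f x]| <= k) -> #|A| <= k * #|f @: A|.
Proof.
move=> H; rewrite -sum1_card (partition_big_imset f) /= mulnC -sum_nat_const.
apply: leq_sum => Y /imsetP[x xA ->].
rewrite sum1dep_card; apply: leq_trans (H x xA).
by apply: subset_leq_card; apply/subsetP => y; rewrite !inE.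
Qed.

Section Cnt.
Variable T : finType.
Implicit Types (p : {perm T}).

Lemma porbit_fix' p x y : p x = x -> y \in porbit p x -> y = x.
Proof.
move=> px /porbitP[i ->]; elim: i => [|i IH]; first by rewrite expg0 perm1.
by rewrite expgSr permM IH px.
Qed.

Lemma porbits_lower p (W : {set T}) :
  {in W &, forall z1 z2, z2 \in porbit p z1 -> z2 = z1} -> #|W| <= #|porbits p|.
Proof.
move=> H; rewrite -(card_in_imset (f := porbit p)).
  by apply: subset_leq_card; apply: imsetS; apply/subsetP.
move=> z1 z2 h1 h2 e; apply: esym; apply: H => //.
by rewrite -eq_porbit_mem e.
Qed.

Lemma porbits_lower2 p (W : {set T}) (A : {pred T}) :
  (forall z, z \in W -> p z = z) -> (forall z, z \in A -> z \notin W) ->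
  #|W| + #|porbit p @: A| <= #|porbits p|.
Proof.
move=> HW HA.
have cW : #|porbit p @: W| = #|W|.
  rewrite card_in_imset // => z1 z2 h1 h2 e.
  have : z2 \in porbit p z1 by rewrite e porbit_id.
  by move/(porbit_fix' (HW _ h1)).
have dis : [disjoint porbit p @: W & porbit p @: A].
  apply/pred0P => X /=; apply/negP => /andP[/imsetP[w wW ->] /imsetP[z zA e]].
  have : z \in porbit p w by rewrite e porbit_id.
  move/(porbit_fix' (HW _ wW)) => ezw; move: (HA _ zA); rewrite ezw wW //.
have := cardsU (porbit p @: W) (porbit p @: A).
rewrite (disjoint_setI0 dis) cards0 subn0 cW => <-.
apply: subset_leq_card; apply/subsetP => X /setUP[] /imsetP[z _ ->]; exact: imset_f.
Qed.
End Cnt.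

Lemma porbit_sub (T : finType) (p : {perm T}) (S : pred T) x :
  x \in S -> (forall z, z \in S -> p z \in S) -> {subset porbit p x <= S}.
Proof.
move=> xS cl y /porbitP[i ->]; elim: i => [|i IH]; first by rewrite expg0 perm1.
by rewrite expgSr permM; apply: cl.
Qed.


Section Core.
Variables (D : finType) (s a : {perm D}) (n : nat).
Local Notation I := 'I_n.+1.
Variables (P : I -> D) (m : I -> nat) (lab : pred D).
Local Notation ph := (phi s a).
Definition cc i := iter (m i) s (P i).
Hypothesis ha2 : forall d, a (a d) = d.
Hypothesis hcub : forall d, fingraph.order s d = 3.
Hypothesis hconn : forall x y, connect (fun u v => (v == s u) || (v == a u)) x y.
Hypothesis hPd : forall i j, i != j -> ~~ fconnect s (P i) (P j).
Hypothesis hm0 : forall i, 0 < m i.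
Hypothesis hm3 : forall i, m i <= 3.
Hypothesis hla : forall d, lab (a d) = lab d.
Hypothesis hls : forall d, ~~ [exists i, fconnect s (P i) d] -> lab (s d) = lab d.
Hypothesis hlP : forall i d, fconnect s (P i) d -> lab d = (findex s (s (P i)) d < m i).
Hypothesis hface : forall i, fconnect ph (s (cc i)) (s (P (ordS i))).
Hypothesis hfd : forall i j, i != j -> ~~ fconnect ph (s (cc i)) (s (cc j)).

Lemma sinj : injective s. Proof. exact: perm_inj. Qed.
Lemma ssym x y : fconnect s x y = fconnect s y x.
Proof. exact: (fconnect_sym sinj). Qed.
Lemma strans x y z : fconnect s x y -> fconnect s y z -> fconnect s x z.
Proof. exact: connect_trans. Qed.
Lemma sS x : fconnect s x (s x). Proof. exact: fconnect1. Qed.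

Lemma vert_uniq i j d : fconnect s (P i) d -> fconnect s (P j) d -> i = j.
Proof.
move=> hi hj; apply/eqP/negPn/negP => ne; move: (hPd ne).
by rewrite (strans hi) // ssym.
Qed.

Lemma vpos i d : fconnect s (P i) d ->
  d = iter (findex s (s (P i)) d) s (s (P i)) /\ findex s (s (P i)) d < 3.
Proof.
move=> h; have h' : fconnect s (s (P i)) d by rewrite -(same_fconnect1 sinj).
split; first by rewrite iter_findex.
by rewrite -(hcub (s (P i))) findex_max.
Qed.

Lemma findex_it i j : j < 3 -> findex s (s (P i)) (iter j s (s (P i))) = j.
Proof. by move=> h; rewrite findex_iter // hcub. Qed.

Lemma P_it i : iter 3 s (P i) = P i.
Proof. by rewrite -{1}(hcub (P i)) (iter_order sinj). Qed.

Lemma conn_cc i : fconnect s (P i) (cc i).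
Proof. exact: fconnect_iter. Qed.

Definition islast d := [pick i | d == cc i].

Lemma islast_cc i : islast (cc i) = Some i.
Proof.
rewrite /islast; case: pickP => [j /eqP e | h]; last by move: (h i); rewrite eqxx.
congr Some; apply: (@vert_uniq j i (cc i)); last exact: conn_cc.
by rewrite e; apply: conn_cc.
Qed.

Lemma islast_some d i : islast d = Some i -> d = cc i.
Proof. by rewrite /islast; case: pickP => // j /eqP -> [<-]. Qed.

Lemma lab_next d : lab d -> islast d = None -> lab (s d).
Proof.
move=> ld nl.
case: (boolP [exists i, fconnect s (P i) d]) => [/existsP[i hi]|nn]; last by rewrite hls.
have [e j3] := vpos hi; move: e j3; set j := findex s (s (P i)) d => e j3.
rewrite (hlP hi) -/j in ld.
have [ej|nej] := eqVneq j.+1 (m i).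
  have : d = cc i by rewrite /cc -ej iterSr -e.
  by move=> dc; rewrite dc islast_cc in nl.
have lj : j.+1 < m i by rewrite ltn_neqAle nej ld.
have hsd : fconnect s (P i) (s d) by apply: strans hi (sS d).
rewrite (hlP hsd) e -iterS findex_it //.
by apply: leq_trans lj (hm3 i).
Qed.

Lemma P_as_it i : P i = iter 2 s (s (P i)).
Proof. by rewrite -iterSr P_it. Qed.

Lemma lab_notP d i : lab d -> islast d = None -> d != P i.
Proof.
move=> ld nl; apply/eqP => e; subst d.
rewrite (hlP (connect0 _ (P i))) {2}P_as_it findex_it // in ld.
have m3 : m i = 3 by have := hm3 i; lia.
have : P i = cc i by rewrite /cc m3 P_it.
by move=> e; rewrite e islast_cc in nl.
Qed.

Lemma lab_first i : lab (s (P i)).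
Proof.
rewrite (hlP (sS (P i))).
have -> : s (P i) = iter 0 s (s (P i)) by [].
by rewrite findex_it.
Qed.

Lemma lab_cc i : lab (cc i).
Proof.
rewrite (hlP (conn_cc i)) /cc.
have := hm3 i; have := hm0 i; case: (m i) => [|j] // _ h3.
by rewrite iterSr findex_it.
Qed.

Definition DM := (D + (I + I))%type.

Definition sigf (z : DM) : DM :=
  match z with
  | inl d => if lab d then (if islast d is Some i then inr (inl i) else inl (s d))
             else inl d
  | inr (inl i) => inr (inr (ord_pred i))
  | inr (inr i) => inl (s (P (ordS i)))
  end.

Definition alf (z : DM) : DM :=
  match z with
  | inl d => if lab d then inl (a d) else inl d
  | inr (inl i) => inr (inr i)
  | inr (inr i) => inr (inl i)
  end.

Lemma alfK : involutive alf.
Proof.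
by case=> [d|[i|i]] //=; case: ifP => ld /=; rewrite ?hla ?ld ?ha2.
Qed.

Lemma sigf_inj : injective sigf.
Proof.
move=> [d1|[i1|i1]] [d2|[i2|i2]] //=.
- case: ifP => l1; case: ifP => l2.
  + case e1: (islast d1) => [j1|]; case e2: (islast d2) => [j2|] //.
    * by case=> ej; rewrite (islast_some e1) (islast_some e2) ej.
    * by case=> /sinj ->.
  + case E1: (islast d1) => [j1|] //; case=> ed.
    by rewrite -ed lab_next in l2.
  + case E2: (islast d2) => [j2|] //; case=> ed.
    by rewrite ed lab_next in l1.
  + by case=> ->.
- by case: ifP => _ //; case: (islast d1).
- case: ifP => l1; last by case=> ed; rewrite ed lab_first in l1.
  case e1: (islast d1) => [j1|] // [] /sinj ed.
  by move: (lab_notP (ordS i2) l1 e1); rewrite ed eqxx.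
- by case: ifP => _ //; case: (islast d2).
- move/(congr1 (fun z : DM => if z is inr (inr k) then k else ord0)) => e.
  by rewrite (@ord_pred_inj n.+1 _ _ e).
- case: ifP => l2; last by case=> ed; rewrite -ed lab_first in l2.
  case e2: (islast d2) => [j2|] // [] /sinj ed.
  by move: (lab_notP (ordS i1) l2 e2); rewrite ed eqxx.
- case=> /sinj ed; congr (inr (inr _)); apply: (@ordS_inj n.+1).
  apply: (@vert_uniq _ _ (P (ordS i2))); last exact: connect0.
  by rewrite ed; apply: connect0.
Qed.

Definition sigM : {perm DM} := perm sigf_inj.
Definition alM : {perm DM} := perm (can_inj alfK).

Definition phM : {perm DM} := (alM * sigM)%g.
Lemma sigME z : sigM z = sigf z. Proof. by rewrite permE. Qed.
Lemma alME z : alM z = alf z. Proof. by rewrite permE. Qed.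
Lemma phME z : phM z = sigf (alf z). Proof. by rewrite permM sigME alME. Qed.

Definition EX : {set DM} := [set inl d | d in [pred d | ~~ lab d]].

Lemma inEX d : (inl d \in EX) = ~~ lab d.
Proof.
apply/imsetP/idP => [[d' hd [->]]//|hd]; by exists d.
Qed.
Lemma inEXr z : z \in EX -> exists2 d, z = inl d & ~~ lab d.
Proof. by case/imsetP => d hd ->; exists d. Qed.

Lemma fixEX z : z \in EX -> [/\ sigM z = z, alM z = z & phM z = z].
Proof.
case/inEXr => d -> /negbTE ld.
by rewrite phME sigME alME /= ld /= ld.
Qed.

Local Notation rM := (crel sigM alM).
Local Notation yy i := (inr (inr i) : DM).
Local Notation xx i := (inr (inl i) : DM).

Lemma c_step i : connect rM (yy (ordS i)) (yy i).
Proof.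
apply: (@connect_trans _ _ (xx (ordS i))); apply: connect1; rewrite /crel.
  by rewrite alME /= eqxx orbT.
by rewrite sigME /= ordSK eqxx.
Qed.

Lemma c_y i : connect rM (yy ord0) (yy i).
Proof.
have H j : j < n.+1 -> connect rM (yy ord0) (yy (inord j)).
  elim: j => [|j IH] hj.
    by have -> : (inord 0 : I) = ord0 by apply: val_inj; rewrite /= inordK.
  apply: connect_trans (IH (ltnW hj)) _; rewrite crel_sym.
  have -> : (inord j.+1 : I) = ordS (inord j).
    by apply: val_inj; rewrite /= !inordK ?modn_small // ltnW.
  exact: c_step.
by rewrite -(inord_val i); apply: H.
Qed.

Lemma c_x i : connect rM (yy ord0) (xx i).
Proof.
apply: connect_trans (c_y i) (connect1 _).
by rewrite /crel alME /= eqxx orbT.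
Qed.

Lemma conn_it i j : fconnect s (P i) (iter j s (s (P i))).
Proof. rewrite (same_fconnect1 sinj); exact: fconnect_iter. Qed.

Lemma lab_it i j : j < m i -> lab (iter j s (s (P i))).
Proof.
move=> hj; rewrite (hlP (conn_it i j)) findex_it //.
by apply: leq_trans hj (hm3 i).
Qed.

Lemma c_vert i j : j < m i -> connect rM (yy ord0) (inl (iter j s (s (P i)))).
Proof.
elim: j => [|j IH] hj.
  apply: connect_trans (c_y (ord_pred i)) (connect1 _).
  by rewrite /crel sigME /= ord_predK eqxx.
apply: connect_trans (IH (ltnW hj)) (connect1 _).
rewrite /crel sigME /=.
rewrite lab_it ?(ltnW hj) //.
case E: (islast _) => [k|]; last by rewrite ?iterS eqxx.
exfalso; have ek := islast_some E.
have ki : k = i.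
  apply: (@vert_uniq k i (cc k)); first exact: conn_cc.
  by rewrite -ek; apply: conn_it.
move: ek; rewrite ki /cc.
have := hm0 i; case Em: (m i) => [|mm] // _.
rewrite iterSr => /(congr1 (findex s (s (P i)))).
rewrite !findex_it; [lia| |]; have := hm3 i; lia.
Qed.

Lemma c_noose d i : fconnect s (P i) d -> lab d -> connect rM (yy ord0) (inl d).
Proof.
move=> hi ld; have [e _] := vpos hi; rewrite e; apply: c_vert.
by rewrite -(hlP hi).
Qed.

Lemma c_lab d : lab d -> connect rM (yy ord0) (inl d).
Proof.
move=> ld; case/connectP: (hconn d (P ord0)) => q hq hl.
elim: q d ld hq hl => [|z q IH] d ld /=.
  by move=> _ e; apply: (@c_noose d ord0) => //; rewrite e connect0.
case/andP => hdz hq hl.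
case: (boolP [exists i, fconnect s (P i) d]) => [/existsP[i hi] | nn].
  exact: c_noose hi ld.
have nl : islast d = None.
  case E: (islast d) => [k|] //; move: nn; rewrite (islast_some E).
  by move/existsP; case; exists k; apply: conn_cc.
have lz : lab z by case/orP: hdz => /eqP ->; rewrite ?hls ?hla.
apply: connect_trans (IH z lz hq hl) _; rewrite crel_sym; apply: connect1.
by case/orP: hdz => /eqP ->; rewrite /crel sigME alME /= ld ?nl eqxx ?orbT.
Qed.

Lemma c_all z : z \notin EX -> connect rM (yy ord0) z.
Proof.
case: z => [d|[i|i]] hz; [|exact: c_x|exact: c_y].
by apply: c_lab; move: hz; rewrite inEX negbK.
Qed.

Lemma ncompM : n_comp rM {: DM} <= #|EX| + 1.
Proof.
rewrite /n_comp_mem addn1.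
apply: leq_trans (_ : #|fingraph.root rM (yy ord0) |: EX| <= _); last first.
  by rewrite cardsU1; case: (_ \notin _).
apply/subset_leq_card/subsetP => r; rewrite inE /= andbT => /eqP rr.
rewrite in_setU1.
apply/orP; case: (boolP (r \in EX)) => hr; [by right|left].
rewrite -rr; apply/eqP; apply/(fingraph.rootP (crel_sym _ _)).
by rewrite crel_sym; apply: c_all.
Qed.

Definition LD : {set DM} := [set inl d | d in [pred d | lab d]].

Lemma card_LD : #|LD| = #|[pred d | lab d]|.
Proof. by rewrite card_imset //; move=> u v [->]. Qed.
Lemma card_EX : #|EX| = #|[pred d | ~~ lab d]|.
Proof. by rewrite card_imset //; move=> u v [->]. Qed.

Definition Sv d1 : {pred DM} := [pred z |
  match z with
  | inl e => fconnect s d1 e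
  | inr (inl i) => fconnect s (P i) d1
  | inr (inr i) => fconnect s (P (ordS i)) d1
  end].

Lemma Sv_closed d1 z : z \in Sv d1 -> sigM z \in Sv d1.
Proof.
rewrite !inE sigME; case: z => [e|[i|i]] /=.
- case: ifP => le; last by [].
  case E: (islast e) => [k|] /=; last by move=> h; apply: strans h (sS e).
  by move=> h; rewrite ssym; apply: strans h _; rewrite (islast_some E) ssym conn_cc.
- by rewrite ord_predK.
- by move=> h; rewrite ssym in h; apply: strans h (sS _).
Qed.

Lemma cnt_sig1 : #|[pred d | lab d]| <= 3 * #|porbit sigM @: LD|.
Proof.
rewrite -card_LD; apply: fiber_bound => x /imsetP[d1 _ ->].
have sub : {subset porbit sigM (inl d1) <= Sv d1}.
  apply: porbit_sub => //; [exact: connect0 | exact: Sv_closed].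
rewrite -(hcub d1) /fingraph.order.
apply: leq_trans (_ : #|[set inl e | e in fconnect s d1]| <= _); last first.
  exact: leq_imset_card.
apply/subset_leq_card/subsetP => z; rewrite !inE => /andP[zL /eqP ez].
have : z \in porbit sigM (inl d1) by rewrite -ez porbit_id.
move/sub; case/imsetP: zL => e _ -> he.
by apply/imsetP; exists e.
Qed.

Lemma cnt_sig : #|EX| + #|porbit sigM @: LD| <= #|porbits sigM|.
Proof.
apply: porbits_lower2 => z.
  by move/fixEX => [].
by case/imsetP => d ld ->; rewrite inEX negbK.
Qed.

Lemma cnt_al1 : #|~: EX| <= 2 * #|porbit alM @: ~: EX|.
Proof.
apply: fiber_bound => x _.
have sub : {subset porbit alM x <= [set x; alM x]}.
  apply: porbit_sub; first by rewrite !inE eqxx.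
  move=> z; rewrite !inE => /orP[] /eqP ->; rewrite ?eqxx ?orbT //.
  by rewrite !alME alfK eqxx.
apply: (@leq_trans #|[set x; alM x]|); last by rewrite cards2; case: (_ != _).
apply/subset_leq_card/subsetP => z; rewrite !inE => /andP[_ /eqP ez].
have : z \in porbit alM x by rewrite -ez porbit_id.
by move/sub; rewrite !inE.
Qed.

Lemma cnt_al : #|EX| + #|porbit alM @: ~: EX| <= #|porbits alM|.
Proof.
apply: porbits_lower2 => z; first by move/fixEX => [].
by rewrite inE.
Qed.

Lemma phinj : injective ph.
Proof. by move=> u v; rewrite /phi => /perm_inj /perm_inj. Qed.

Definition FP : {pred D} := [pred d | ~~ [exists i, fconnect ph d (s (cc i))] &&
                                  [forall y, fconnect ph d y ==> lab y]].

Definition RR : {set DM} := [set inl r | r in [predI froots ph & FP]].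

Definition Sf r : {pred DM} := [pred z | if z is inl e then fconnect ph r e else false].
Definition Sx i : {pred DM} := [pred z | match z with
   | inl e => fconnect ph (s (cc i)) e | inr (inl j) => j == i | _ => false end].
Definition Sy : {pred DM} := [pred z | if z is inr (inr _) then true else false].

Lemma Sf_closed r z : r \in FP -> z \in Sf r -> phM z \in Sf r.
Proof.
rewrite !inE => /andP[ntr /forallP allab].
case: z => [e|//] /= hre; rewrite phME /=.
have le : lab e by have := allab e; rewrite hre.
rewrite le /= hla le.
case E: (islast (a e)) => [k|] /=; last first.
  by apply: connect_trans hre (connect1 _); rewrite /= /phi.
exfalso; move/negP: ntr; apply; apply/existsP; exists k.
apply: connect_trans hre (connect1 _).
by rewrite /= /phi -(islast_some E).
Qed.

Lemma Sx_closed i z : z \in Sx i -> phM z \in Sx i.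
Proof.
rewrite !inE phME; case: z => [e|[j|j]] //=.
- move=> he; case: ifP => le /=; last by rewrite le.
  rewrite hla le.
  case E: (islast (a e)) => [k|] /=; last first.
    by apply: connect_trans he (connect1 _); rewrite /= /phi.
  have [//|nki] := eqVneq k i; move: (hfd nki).
  have : fconnect ph (s (cc i)) (s (cc k)).
    apply: connect_trans he (connect1 _).
    by rewrite /= /phi -(islast_some E).
  by rewrite (fconnect_sym phinj) => ->.
- by move/eqP->; apply: hface.
Qed.

Lemma Sy_closed z : z \in Sy -> phM z \in Sy.
Proof. by rewrite !inE phME; case: z => [//|[//|j]]. Qed.

Definition WW : {set DM} := RR :|: [set xx i | i in I] :|: [set yy ord0] :|: EX.

Lemma WW_orb : {in WW &, forall z1 z2, z2 \in porbit phM z1 -> z2 = z1}.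
Proof.
move=> z1 z2 h1 h2 h12.
case: (boolP (z2 \in EX)) => [/fixEX[_ _ f2]|n2].
  by rewrite porbit_sym in h12; apply: esym; apply: porbit_fix' f2 h12.
case: (boolP (z1 \in EX)) => [/fixEX[_ _ f1]|n1].
  exact: porbit_fix' f1 h12.
move: h1 h2; rewrite !in_setU (negbTE n1) (negbTE n2) !orbF.
case/orP => [/orP[]|].
- case/imsetP => r; rewrite inE => /andP[rr fr] e1; subst z1.
  have sub : {subset porbit phM (inl r) <= Sf r}.
    by apply: porbit_sub => [|z]; [rewrite inE /=; exact: connect0 | exact: Sf_closed].
  have {h12}h12 := sub _ h12.
  case/orP => [/orP[]|].
  + case/imsetP => r'; rewrite inE => /andP[rr' _] e2; subst z2.
    rewrite inE /= in h12.
    congr inl; rewrite -(eqP rr) -(eqP rr'); apply: esym.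
    by apply/(fingraph.rootP (fconnect_sym phinj)).
  + by case/imsetP => j _ e2; subst z2.
  + by rewrite inE => /eqP e2; subst z2.
- case/imsetP => i _ e1; subst z1.
  have sub : {subset porbit phM (xx i) <= Sx i}.
    by apply: porbit_sub => [|z]; [rewrite inE /= | exact: Sx_closed].
  have {h12}h12 := sub _ h12.
  case/orP => [/orP[]|].
  + case/imsetP => r'; rewrite inE => /andP[_ fr'] e2; subst z2.
    rewrite inE /= in h12; exfalso.
    move: fr'; rewrite inE => /andP[/negP ntr _]; apply: ntr.
    by apply/existsP; exists i; rewrite (fconnect_sym phinj).
  + case/imsetP => j _ e2; subst z2.
    by rewrite inE /= in h12; rewrite (eqP h12).
  + by rewrite inE => /eqP e2; subst z2.
- rewrite inE => /eqP e1; subst z1.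
  have sub : {subset porbit phM (yy ord0) <= Sy}.
    by apply: porbit_sub => [|z]; [rewrite inE /= | exact: Sy_closed].
  have {h12}h12 := sub _ h12.
  case/orP => [/orP[]|].
  + by case/imsetP => r' _ e2; subst z2.
  + by case/imsetP => j _ e2; subst z2.
  + by rewrite inE => /eqP.
Qed.

Lemma cardU_dis (A B : {set DM}) : [disjoint A & B] -> #|A :|: B| = #|A| + #|B|.
Proof. by move=> dis; rewrite cardsU (disjoint_setI0 dis) cards0 subn0. Qed.

Lemma card_WW : #|WW| = fcard ph FP + n.+1 + 1 + #|EX|.
Proof.
rewrite /WW !cardU_dis.
- congr (_ + _ + _ + _).
  + by rewrite card_imset //; move=> u v [->].
  + by rewrite card_imset ?card_ord //; move=> u v [->].
  + by rewrite cards1.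
- apply/pred0P => z /=; apply/negP => /andP[].
  by case/imsetP => ? _ ->; case/imsetP.
- apply/pred0P => z /=; apply/negP => /andP[].
  rewrite in_setU => /orP[]; case/imsetP => ? _ ->; by rewrite in_set1.
- apply/pred0P => z /=; apply/negP => /andP[].
  rewrite !in_setU in_set1 => /orP[/orP[]|].
  + case/imsetP => r; rewrite inE => /andP[_ fr] ->; rewrite inEX.
    by move: fr; rewrite inE => /andP[_ /forallP /(_ r)]; rewrite connect0 /= => ->.
  + by case/imsetP => i _ ->; case/imsetP.
  + by move/eqP->; case/imsetP.
Qed.

Theorem core : 6 * fcard ph FP <= #|[pred d | lab d]| + 6.
Proof.
have G := genus sigM alM.
have H1 := cnt_sig; have H2 := cnt_sig1; have H3 := cnt_al; have H4 := cnt_al1.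
have H5 : #|WW| <= #|porbits phM| := porbits_lower WW_orb.
have H6 := card_WW; have H7 := ncompM.
have H8 : #|~: EX| = #|{: DM}| - #|EX| by rewrite cardsCs setCK.
have H9 : #|{: DM}| = #|D| + (n.+1 + n.+1) by rewrite card_sum card_sum !card_ord.
have H10 : #|[pred d | lab d]| + #|[pred d | ~~ lab d]| = #|D|.
  by rewrite -(cardC [pred d | lab d]); congr (_ + _); apply: eq_card.
have H11 := card_EX.
have H12 : #|EX| <= #|{: DM}| by apply: max_card.
rewrite /phM in H5.
pose cs := #|porbits sigM|; rewrite -/cs in G H1.
pose ca := #|porbits alM|; rewrite -/ca in G H3.
pose cf := #|porbits (alM * sigM)%g|; rewrite -/cf in G H5.
pose dm := #|{: DM}|; rewrite -/dm in G H8 H9 H12.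
pose cc0 := n_comp rM {: DM}; rewrite -/cc0 in G H7.
pose ex := #|EX|; rewrite -/ex in H1 H3 H6 H7 H8 H11 H12.
pose vs := #|[set porbit sigM x | x in LD]|; rewrite -/vs in H1 H2.
pose as0 := #|[set porbit alM x | x in ~: EX]|; rewrite -/as0 in H3 H4.
pose nn := #|[pred d | lab d]|; rewrite -/nn in H2 H10 *.
pose ce := #|~: EX|; rewrite -/ce in H4 H8.
pose w := #|WW|; rewrite -/w in H5 H6.
pose f := fcard ph FP; rewrite -/f in H6 *.
pose dc := #|D|; rewrite -/dc in H9 H10.
pose mm := #|[pred d | ~~ lab d]|; rewrite -/mm in H10 H11.
clearbody cs ca cf dm cc0 ex vs as0 nn ce w f dc mm.
lia.
Qed.

End Core.


Lemma ratb (x y : nat) : ((x%:R : rat) <= 2%:R / 3%:R * y%:R)%R = (3 * x <= 2 * y)%N.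
Proof.
rewrite GRing.mulrAC Num.Theory.ler_pdivlMr ?Num.Theory.ltr0n //.
by rewrite -!GRing.natrM Num.Theory.ler_nat mulnC.
Qed.

Lemma rvS k (i : 'I_k.+1) : ordS (rev_ord (ordS i)) = rev_ord i.
Proof.
apply: val_inj => /=.
have lti := ltn_ord i; case: (ltngtP i k) => hi.
- rewrite (modn_small (_ : i.+1 < k.+1)) //.
  rewrite modn_small; lia.
- lia.
- by rewrite hi modnn subn1 /= modnn subnn.
Qed.

Section Mod3.
Variables (D : finType) (s : {perm D}).
Hypothesis hcub : forall d, fingraph.order s d = 3.

Lemma it3 x : iter 3 s x = x.
Proof. by rewrite -{1}(hcub x) (iter_order (@perm_inj _ s)). Qed.

Lemma mod3 x d f : f < 2 -> fconnect s x d ->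
  (findex s (s (iter f s (s x))) d < 2 - f) = ~~ (findex s (s x) d <= f).
Proof.
move=> hf hxd.
have h' : fconnect s (s x) d by rewrite -(same_fconnect1 (@perm_inj _ s)).
have hg : findex s (s x) d < 3 by rewrite -(hcub (s x)) findex_max.
have ed := iter_findex h'.
move: hg ed; set g := findex s (s x) d => hg ed.
have key k : k < 3 -> iter (k + f.+1) s (s x) = d -> findex s (s (iter f s (s x))) d = k.
  move=> hk e; rewrite -e iterD -iterS findex_iter // hcub //.
suff [k [hk ek e3]] : exists k, [/\ k < 3, iter (k + f.+1) s (s x) = d &
     (k < 2 - f) = ~~ (g <= f)] by rewrite (key k hk ek) e3.
clear key; move: hg hf ed; case: g => [|[|[|g]]] //= _; case: f => [|[|f]] //= _ ed.
- by exists 2; rewrite -ed; split => //; exact: it3.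
- by exists 1; rewrite -ed; split => //; exact: it3.
- by exists 0; rewrite -ed.
- by exists 2; rewrite -ed; split => //; rewrite -[2 + 2]/(1 + 3) iterD it3.
- by exists 1; rewrite -ed.
- by exists 0; rewrite -ed.
Qed.
End Mod3.

Lemma order_a (D : finType) (a : {perm D}) d :
  (forall d, a (a d) = d) -> (forall d, a d != d) -> fingraph.order a d = 2.
Proof.
move=> ha2 hafp.
have cyc : fcycle a [:: d; a d] by rewrite /= !eqxx ha2 eqxx.
have u : uniq [:: d; a d] by rewrite /= inE eq_sym hafp.
by rewrite (order_cycle cyc u) // inE eqxx.
Qed.

Unset Implicit Arguments. Set Strict Implicit. Set Printing Implicit Defensive.

Theorem lemma4p16 (D : finType) (s a : {perm D}) (k : nat)
    (A B : 'I_k.+1 -> D) (lab : pred D) :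
  multigraph_map a -> cubic s -> connected_map s a -> spherical s a ->
  noose s a A B -> noose_sides s a A B lab ->
  edge_balanced a (2%:R / 3%:R)%R lab ->
  face_balanced s a (2%:R / 3%:R)%R B lab.
Proof.
move=> [ha2 hafp] hcub hconn hsph [n1 n2 n3 n4] [hla hls hlP] heb.
have sinj := @perm_inj _ s; have ainj := @perm_inj _ a.
have hE2 : n_edges a * 2 = #|D|.
  apply: fcard_order_set => //; try by move=> x y _.
  by apply/subsetP => d _; rewrite inE order_a.
have hV3 : n_vertices s * 3 = #|D|.
  apply: fcard_order_set => //; try by move=> x y _.
  by apply/subsetP => d _; rewrite inE hcub.
have hN b : edges_on_side a lab b * 2 = #|[pred d | lab d == b]|.
  apply: fcard_order_set => //; last by move=> x y /eqP <-; rewrite !inE hla.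
  by apply/subsetP => d _; rewrite inE order_a.
have heb' b : 3 * edges_on_side a lab b <= 2 * n_edges a by rewrite -ratb; exact: heb.
suff key b : 6 * faces_on_side s a B lab b <= #|[pred d | lab d == b]| + 6.
  rewrite /face_balanced => b; rewrite ratb.
  have := key b; have := heb' b; have := hN b; rewrite /spherical in hsph.
  lia.
have phinj : injective (phi s a) by move=> u v; rewrite /phi => /sinj /ainj.
have fsym := fconnect_sym phinj.
pose F i := findex s (s (A i)) (B i).
have hsAB i : fconnect s (s (A i)) (B i) by rewrite -(same_fconnect1 sinj).
have hB i : B i = iter (F i) s (s (A i)) by rewrite iter_findex.
have hF i : F i < 3 by rewrite -(hcub (s (A i))) findex_max.
have onnP d : on_noose s A d = [exists i, fconnect s (A i) d] by [].
case: b.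
-
  pose m i := (F i).+1.
  have hcc i : cc s A m i = B i by rewrite /cc /m iterSr -hB.
  have hlP' i d : fconnect s (A i) d -> lab d = (findex s (s (A i)) d < m i).
    by move=> h; rewrite (hlP _ _ h) ltnS.
  have hface' i : fconnect (phi s a) (s (cc s A m i)) (s (A (ordS i))).
    by rewrite hcc.
  have hfd' i j : i != j -> ~~ fconnect (phi s a) (s (cc s A m i)) (s (cc s A m j)).
    by rewrite !hcc; apply: n4.
  have H := @core D s a k A m lab ha2 hcub hconn n2 (fun i => isT) hF hla hls hlP'
     hface' hfd'.
  have -> : #|[pred d | lab d == true]| = #|[pred d | lab d]|.
    by apply: eq_card => d; rewrite !inE eqb_id.
  suff -> : faces_on_side s a B lab true = fcard (phi s a) (FP s a A m lab) by [].
  rewrite /faces_on_side; apply: eq_n_comp_r => d.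
  rewrite !inE /face_on_side /traversed.
  congr (~~ _ && _).
    by apply: eq_existsb => i; rewrite hcc.
  by apply: eq_forallb => y; rewrite eqb_id.
have ssym x y : fconnect s x y = fconnect s y x by exact: fconnect_sym.
case: (boolP [forall i, F i < 2]) => [/forallP nd|]; last first.
  rewrite negb_forall => /existsP[i0]; rewrite -leqNgt => hi0.
  have F2 : F i0 = 2 by have := hF i0; lia.
  have eBA : B i0 = A i0 by rewrite hB F2 -iterSr it3.
  exfalso.
  have [eq|ne] := eqVneq (ord_pred i0) i0; last first.
    move: (n4 _ _ ne); rewrite eBA -{2}(ord_predK i0).
    by rewrite (n3 (ord_pred i0)).
  have k0 : k = 0.
    move/(congr1 val): eq => /=; have := ltn_ord i0.
    move: (nat_of_ord i0) => j; rewrite (addnS j k) /=; case: j => [|j] lt.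
      by rewrite add0n modn_small.
    rewrite addSnnS modnDr modn_small; first lia.
    lia.
  have alli (i : 'I_k.+1) : i = i0.
    by apply: ord_inj; have := ltn_ord i; have := ltn_ord i0; lia.
  have hv d : fconnect s (A i0) d -> lab d.
    move=> h; rewrite (hlP _ _ h) -/(F i0) F2.
    have : findex s (s (A i0)) d < 3.
      by rewrite -(hcub (s (A i0))) findex_max // -(same_fconnect1 sinj).
    lia.
  have allab d : lab d.
    case/connectP: (hconn (A i0) d) => q hq ->.
    have : lab (A i0) by apply: hv; exact: connect0.
    elim: q (A i0) hq => [|z q IH] x //= /andP[hxz hq] lx.
    apply: IH hq _; case/orP: hxz => /eqP ->; last by rewrite hla.
    case: (boolP (on_noose s A x)) => [/existsP[i hi]|nn]; last by rewrite hls.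
    by apply: hv; rewrite -(alli i); apply: connect_trans hi (fconnect1 _ _).
  have hall : edges_on_side a lab true = n_edges a.
    by apply: eq_n_comp_r => d; rewrite !inE allab.
  have := heb' true; rewrite hall => hle.
  have hD : #|D| = 0 by lia.
  by move/card0_eq: hD => /(_ (A i0)).
pose rv := @rev_ord k.+1.
pose P i := B (rv i).
pose m i := 2 - F (rv i).
pose lab' := fun d => ~~ lab d.
have rvK : involutive rv by move=> x; rewrite /rv rev_ordK.
have hBA i : fconnect s (B i) (A i) by rewrite ssym.
have hPd i j : i != j -> ~~ fconnect s (P i) (P j).
  move=> ne; apply/negP => h.
  have ne' : rv i != rv j by apply: contra ne => /eqP/rev_ord_inj ->.
  move: (n2 _ _ ne'); apply/negP/negPn.
  apply: connect_trans (n1 _) (connect_trans h (hBA _)).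
have hm0 i : 0 < m i by rewrite /m; have := nd (rv i); lia.
have hm3 i : m i <= 3 by rewrite /m; lia.
have hla' d : lab' (a d) = lab' d by rewrite /lab' hla.
have hls' d : ~~ [exists i, fconnect s (P i) d] -> lab' (s d) = lab' d.
  move=> H; rewrite /lab' hls //; apply/existsP => [[j hj]]; move/negP: H; apply.
  apply/existsP; exists (rv j); rewrite /P rvK; exact: connect_trans (hBA j) hj.
have hlP' i d : fconnect s (P i) d -> lab' d = (findex s (s (P i)) d < m i).
  move=> h; have hd : fconnect s (A (rv i)) d := connect_trans (n1 _) h.
  rewrite /lab' (hlP _ _ hd) /P /m -/(F (rv i)) {1}(hB (rv i)) mod3 //.
have hcc i : cc s P m i = A (rv i).
  rewrite /cc /P /m hB -iterSr -iterD.
  have := nd (rv i); rewrite -/(F (rv i)) => h2.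
  by rewrite (_ : 2 - F (rv i) + (F (rv i)).+1 = 3) ?it3 //; lia.
have hface' i : fconnect (phi s a) (s (cc s P m i)) (s (P (ordS i))).
  rewrite hcc /P fsym.
  by have := n3 (rv (ordS i)); rewrite /rv rvS.
have hpA x : fconnect (phi s a) (s (B (ord_pred x))) (s (A x)).
  by have := n3 (ord_pred x); rewrite ord_predK.
have hfd' i j : i != j -> ~~ fconnect (phi s a) (s (cc s P m i)) (s (cc s P m j)).
  move=> ne; rewrite !hcc; apply/negP => h.
  have ne' : ord_pred (rv i) != ord_pred (rv j).
    by apply: contra ne => /eqP/ord_pred_inj/rev_ord_inj ->.
  move: (n4 _ _ ne'); apply/negP/negPn.
  apply: connect_trans (hpA _) (connect_trans h _); rewrite fsym; exact: hpA.
have H := @core D s a k P m lab' ha2 hcub hconn hPd hm0 hm3 hla' hls' hlP'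
     hface' hfd'.
have -> : #|[pred d | lab d == false]| = #|[pred d | lab' d]|.
  by apply: eq_card => d; rewrite !inE /lab' eqbF_neg.
suff -> : faces_on_side s a B lab false = fcard (phi s a) (FP s a P m lab') by [].
rewrite /faces_on_side; apply: eq_n_comp_r => d.
rewrite !inE /face_on_side /traversed.
congr (~~ _ && _).
  apply/existsP/existsP => [[i hi]|[i hi]].
    exists (rv (ordS i)); rewrite hcc rvK.
    exact: connect_trans hi (n3 i).
  exists (ord_pred (rv i)); move: hi; rewrite hcc => hi.
  by apply: connect_trans hi _; rewrite fsym.
by apply: eq_forallb => y; rewrite eqbF_neg.
Qed.
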